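(* $\widetilde{S}_{AB}$ is a down-complete Inf semi-lattice, and for every family $\{U_i\;\vert\; i\in I\}$ of subsets of $\mathfrak{S}_A\times\mathfrak{S}_B$, $$\inf^{\widetilde{S}_{AB}}_{i\in I}\Omega(U_i)=\Omega\Big(\bigcup_{i\in I}U_i\Big).$$
   Context: $\mathfrak{B}=\{\mathbf{Y},\mathbf{N},\bot\}$ with meet $\wedge$ and commutative product $\bullet$ ($x\bullet\mathbf{Y}=x$, $x\bullet\mathbf{N}=\mathbf{N}$, $\bot\bullet\bot=\bot$). $(\mathfrak{S}_A,\mathfrak{E}_A,\epsilon^{\mathfrak{S}_A})$, $(\mathfrak{S}_B,\mathfrak{E}_B,\epsilon^{\mathfrak{S}_B})$ are States/Effects Chu spaces (down-complete Inf semi-lattices of states and of effects, evaluation maps $\epsilon$ preserving arbitrary infima in each variable). For $U\subseteq\mathfrak{S}_A\times\mathfrak{S}_B$, $\Omega(U)$ is the map $\mathfrak{E}_A\times\mathfrak{E}_B\to\mathfrak{B}$, $(\mathfrak{l}_A,\mathfrak{l}_B)\mapsto\bigwedge_{(\sigma_A,\sigma_B)\in U}\epsilon^{\mathfrak{S}_A}_{\mathfrak{l}_A}(\sigma_A)\bullet\epsilon^{\mathfrak{S}_B}_{\mathfrak{l}_B}(\sigma_B)$ (subsets giving the same map are identified). The minimal tensor product $\widetilde{S}_{AB}$ is the set of all such maps $\Omega(U)$, ordered pointwise (it is the sub Inf semi-lattice of the maximal tensor product generated by the pure tensors). *)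

(* Defs.v *)
From Stdlib Require Import ClassicalDescription.

Inductive B3 : Type := BY | BN | Bbot.

Definition B3le (x y : B3) : Prop := x = Bbot \/ x = y.

Definition B3meet (x y : B3) : B3 :=
  match x, y with
  | BY, BY => BY
  | BN, BN => BN
  | _, _ => Bbot
  end.

Definition B3prod (x y : B3) : B3 :=
  match x, y with
  | BN, _ | _, BN => BN
  | BY, z => z
  | z, BY => z
  | Bbot, Bbot => Bbot
  end.

Definition B3inf (P : B3 -> Prop) : B3 :=
  if excluded_middle_informative (forall x, P x -> x = BY) then BY
  else if excluded_middle_informative (forall x, P x -> x = BN) then BN
  else Bbot.

Definition is_lb {T : Type} (le : T -> T -> Prop) (P : T -> Prop) (x : T) : Prop :=
  forall y, P y -> le x y.

Definition is_inf {T : Type} (le : T -> T -> Prop) (P : T -> Prop) (x : T) : Prop :=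
  is_lb le P x /\ forall z, is_lb le P z -> le z x.

Definition is_inf_in {T : Type} (D : T -> Prop) (le : T -> T -> Prop)
  (P : T -> Prop) (x : T) : Prop :=
  D x /\ is_lb le P x /\ forall z, D z -> is_lb le P z -> le z x.

Definition partial_order {T : Type} (le : T -> T -> Prop) : Prop :=
  (forall x, le x x) /\
  (forall x y, le x y -> le y x -> x = y) /\
  (forall x y z, le x y -> le y z -> le x z).

Definition down_complete_inf_semilattice {T : Type} (le : T -> T -> Prop) : Prop :=
  partial_order le /\
  forall P : T -> Prop, (exists x, P x) -> exists x, is_inf le P x.

Definition image {X Y : Type} (f : X -> Y) (P : X -> Prop) : Y -> Prop :=
  fun y => exists x, P x /\ y = f x.

Definition preserves_infs {X Y : Type} (leX : X -> X -> Prop) (leY : Y -> Y -> Prop)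
  (f : X -> Y) : Prop :=
  forall P x, (exists y, P y) -> is_inf leX P x -> is_inf leY (image f P) (f x).

Record SEChu : Type := {
  st : Type;
  ef : Type;
  le_st : st -> st -> Prop;
  le_ef : ef -> ef -> Prop;
  eps : ef -> st -> B3;
  st_dcis : down_complete_inf_semilattice le_st;
  ef_dcis : down_complete_inf_semilattice le_ef;
  eps_st : forall l, preserves_infs le_st B3le (eps l);
  eps_ef : forall s, preserves_infs le_ef B3le (fun l => eps l s)
}.

Definition Omega (A B : SEChu) (U : st A * st B -> Prop) : ef A * ef B -> B3 :=
  fun l => B3inf (fun b => exists s, U s /\
                   b = B3prod (eps A (fst l) (fst s)) (eps B (snd l) (snd s))).

(* Elements of the minimal tensor product (U nonempty so that the meet exists). *)
Definition minTensor (A B : SEChu) (f : ef A * ef B -> B3) : Prop :=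
  exists U : st A * st B -> Prop, (exists s, U s) /\ f = Omega A B U.

Definition fle {A B : SEChu} (f g : ef A * ef B -> B3) : Prop :=
  forall l, B3le (f l) (g l).

(* Main.v *)
Require Import Defs.
From Stdlib Require Import FunctionalExtensionality ClassicalDescription.

Lemma inf_Y (P : B3 -> Prop) : B3inf P = BY -> forall x, P x -> x = BY.
Proof.
  unfold B3inf; destruct (excluded_middle_informative _) as [h|h]; auto.
  destruct (excluded_middle_informative _); discriminate.
Qed.

Lemma inf_N (P : B3 -> Prop) : B3inf P = BN -> forall x, P x -> x = BN.
Proof.
  unfold B3inf; destruct (excluded_middle_informative _) as [h|h]; try discriminate.
  destruct (excluded_middle_informative _); auto; discriminate.
Qed.

Lemma inf_allY (P : B3 -> Prop) : (forall x, P x -> x = BY) -> B3inf P = BY.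
Proof.
  intro h; unfold B3inf; destruct (excluded_middle_informative _); tauto.
Qed.

Lemma inf_allN (P : B3 -> Prop) : (exists x, P x) -> (forall x, P x -> x = BN) -> B3inf P = BN.
Proof.
  intros [x hx] h; unfold B3inf; destruct (excluded_middle_informative _) as [h1|h1].
  - pose proof (h1 x hx); pose proof (h x hx); congruence.
  - destruct (excluded_middle_informative _); tauto.
Qed.

Lemma inf_mono (P Q : B3 -> Prop) : (exists x, P x) -> (forall x, P x -> Q x) ->
  B3le (B3inf Q) (B3inf P).
Proof.
  intros ne sub; unfold B3le.
  destruct (B3inf Q) eqn:E; [right|right|left; reflexivity].
  - symmetry; apply inf_allY; intros x hx; exact (inf_Y Q E x (sub x hx)).
  - symmetry; apply inf_allN; auto; intros x hx; exact (inf_N Q E x (sub x hx)).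
Qed.

Lemma part3 (A B : SEChu) (I : Type) (U : I -> st A * st B -> Prop) :
     (exists i : I, True) -> (forall i, exists s, U i s) ->
     is_inf_in (minTensor A B) fle
       (fun f => exists i, f = Omega A B (U i))
       (Omega A B (fun s => exists i, U i s)).
Proof.
  intros [i0 _] ne. split; [|split].
  - exists (fun s => exists i, U i s). split; auto.
    destruct (ne i0) as [s hs]; exists s, i0; exact hs.
  - intros f [i ->] l. unfold Omega. apply inf_mono.
    + destruct (ne i) as [s hs]. eexists; exists s; split; [exact hs|reflexivity].
    + intros x [s [hs ->]]. exists s; split; [exists i; exact hs|reflexivity].
  - intros z _ hz l. unfold B3le.
    destruct (z l) eqn:E; [right|right|left; reflexivity].
    + symmetry; apply inf_allY. intros x [s [[i hs] ->]].
      assert (h := hz _ (ex_intro _ i eq_refl) l). rewrite E in h.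
      destruct h as [h|h]; [discriminate|].
      apply (inf_Y _ (eq_sym h)). exists s; split; auto.
    + symmetry; apply inf_allN.
      { destruct (ne i0) as [s hs]. eexists; exists s; split; [exists i0; exact hs|reflexivity]. }
      intros x [s [[i hs] ->]].
      assert (h := hz _ (ex_intro _ i eq_refl) l). rewrite E in h.
      destruct h as [h|h]; [discriminate|].
      apply (inf_N _ (eq_sym h)). exists s; split; auto.
Qed.

Lemma B3le_refl x : B3le x x.
Proof. right; reflexivity. Qed.

Theorem mainTheorem4 (A B : SEChu) :
  (* the pointwise order restricted to S~_AB is a partial order *)
  ((forall f, minTensor A B f -> fle f f) /\
   (forall f g, minTensor A B f -> minTensor A B g -> fle f g -> fle g f -> f = g) /\
   (forall f g h, minTensor A B f -> minTensor A B g -> minTensor A B h ->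
      fle f g -> fle g h -> fle f h)) /\
  (* every nonempty subset of S~_AB has an infimum in S~_AB *)
  (forall P : (ef A * ef B -> B3) -> Prop,
     (forall f, P f -> minTensor A B f) -> (exists f, P f) ->
     exists g, is_inf_in (minTensor A B) fle P g) /\
  (* inf_i Omega(U_i) = Omega(union U_i) *)
  (forall (I : Type) (U : I -> st A * st B -> Prop),
     (exists i : I, True) -> (forall i, exists s, U i s) ->
     is_inf_in (minTensor A B) fle
       (fun f => exists i, f = Omega A B (U i))
       (Omega A B (fun s => exists i, U i s))).
Proof.
  split; [|split; [|exact (part3 A B)]].
  - split; [|split].
    + intros f _ l; apply B3le_refl.
    + intros f g _ _ h1 h2. apply functional_extensionality; intro l.
      destruct (h1 l) as [e1|e1]; destruct (h2 l) as [e2|e2]; congruence.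
    + intros f g h _ _ _ h1 h2 l.
      destruct (h1 l) as [e1|e1]; [left; exact e1|].
      rewrite e1; exact (h2 l).
  - intros P hP [f0 hf0].
    set (I := { V : st A * st B -> Prop | (exists s, V s) /\ P (Omega A B V) }).
    assert (hI : exists i : I, True).
    { destruct (hP f0 hf0) as [V [hV ->]]. exists (exist _ V (conj hV hf0)); auto. }
    assert (hne : forall i : I, exists s, proj1_sig i s).
    { intros [V [hV hp]]; exact hV. }
    destruct (part3 A B I (fun i => proj1_sig i) hI hne) as [m [lb gr]].
    eexists; split; [exact m|split].
    + intros f hf. destruct (hP f hf) as [V [hV ->]].
      apply lb. exists (exist _ V (conj hV hf)); reflexivity.
    + intros z hz hlb. apply gr; auto.
      intros f [[V [hV hPV]] ->]. apply hlb. exact hPV.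
Qed.
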